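(* Assume the Setting below. Let $\gamma_1,\dots,\gamma_c\in\mathbb R^d$ be server vectors with fixed vectors $\mathbb E\gamma_1,\dots,\mathbb E\gamma_c$, and suppose that for every $i\in\mathcal H$ there is a probability vector $(p_{i1},\dots,p_{ic})$ with $\mathbb Eg_i=\sum_{z=1}^cp_{iz}\mathbb E\gamma_z$. Let $\hat{\mathcal P}_0$ be an affine subspace containing $\gamma_1,\dots,\gamma_c$, and let $\hat{\mathcal P}$ be any affine subspace with $\ell_t(\hat{\mathcal P})\le\ell_t(\hat{\mathcal P}_0)$. Then $$\ell_t(\hat{\mathcal P})\le\frac{2(n-f)}{|\mathcal H|}\Big(\sum_{i\in\mathcal H}\|g_i-\mathbb Eg_i\|_2^2+\sum_{i\in\mathcal H}\sum_{z=1}^cp_{iz}\|\mathbb E\gamma_z-\gamma_z\|_2^2\Big).$$ Consequently, if $\mathbb E\|g_i-\mathbb Eg_i\|_2^2\le\epsilon^2$ for $i\in\mathcal H$ and $\mathbb E\|\gamma_z-\mathbb E\gamma_z\|_2^2\le\epsilon_s^2$ for all $z$, then $\mathbb E\,\ell_t(\hat{\mathcal P})\le2(n-f)(\epsilon^2+\epsilon_s^2)$.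
   Context: Setting: let $n,f,c,d$ be positive integers with $c\ge2$, $d\ge c$, $n-2f\ge1$. The index set $\{1,\dots,n\}$ is partitioned as $\mathcal H\sqcup\mathcal B$ (honest and Byzantine clients) with $|\mathcal B|\le f$. Each client $i$ has a vector $g_i\in\mathbb R^d$; for $i\in\mathcal H$, $\mathbb Eg_i\in\mathbb R^d$ denotes a fixed vector (the expectation of $g_i$), and $\mathbb E\mu=\frac1{|\mathcal H|}\sum_{i\in\mathcal H}\mathbb Eg_i$. A $k$-dimensional affine subspace is $\mathcal P=\{U\lambda+m:\lambda\in\mathbb R^k\}$ with $U\in\mathbb R^{d\times k}$ having orthonormal columns and $m\in\mathbb R^d$; its orthogonal projection is $\Pi_{\mathcal P}(w)=UU^\top(w-m)+m$. The trimmed reconstruction loss of an affine subspace $\mathcal P$ is $\ell_t(\mathcal P)=\min_{S\subseteq\{1,\dots,n\},\,|S|=n-f}\sum_{i\in S}\|g_i-\Pi_{\mathcal P}(g_i)\|_2^2$. (In the algorithm, $\hat{\mathcal P}_0$ is the affine subspace fitted to the server vectors by truncated SVD, and $\hat{\mathcal P}$ results from alternating minimization, which does not increase $\ell_t$.) *)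

(* Defs.v *)
From HB Require Import structures.
From mathcomp Require Import all_boot all_order all_algebra.
From mathcomp Require Import all_classical all_reals all_analysis.
Set Implicit Arguments. Unset Strict Implicit. Unset Printing Implicit Defensive.
Import Order.TTheory GRing.Theory Num.Theory.
Local Open Scope ring_scope.

Definition sqnorm (R : realType) (d : nat) (v : 'cV[R]_d) : R :=
  \sum_(j < d) (v j 0) ^+ 2.

(* A k-dimensional affine subspace P = {U lambda + m : lambda in R^k},
   U in R^{d x k} with orthonormal columns, m in R^d. *)
Record affsub (R : realType) (d : nat) := AffSub {
  as_k : nat;
  as_U : 'M[R]_(d, as_k);
  as_m : 'cV[R]_d;
  as_orth : as_U^T *m as_U = 1%:M }.

Definition in_affsub (R : realType) (d : nat) (P : affsub R d) (w : 'cV[R]_d) : Prop :=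
  exists lam : 'cV[R]_(as_k P), w = as_U P *m lam + as_m P.

Definition proj_affsub (R : realType) (d : nat) (P : affsub R d) (w : 'cV[R]_d) : 'cV[R]_d :=
  as_U P *m (as_U P)^T *m (w - as_m P) + as_m P.

Definition resid_sum (R : realType) (n d : nat) (g : 'I_n -> 'cV[R]_d)
  (P : affsub R d) (S : {set 'I_n}) : R :=
  \sum_(i in S) sqnorm (g i - proj_affsub P (g i)).

(* a fixed subset of 'I_n of cardinality n - f (used only as the
   starting point of the arg min; it satisfies the constraint) *)
Definition first_set (n f : nat) : {set 'I_n} := [set i : 'I_n | (i < n - f)%N].

(* trimmed reconstruction loss
   l_t(P) = min_{S subset {1..n}, |S| = n - f} sum_{i in S} ||g_i - Pi_P(g_i)||^2 *)
Definition trimmed_loss (R : realType) (n f d : nat) (g : 'I_n -> 'cV[R]_d)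
  (P : affsub R d) : R :=
  resid_sum g P
    (Order.arg_min (first_set n f) (fun S : {set 'I_n} => #|S| == (n - f)%N)
       (resid_sum g P)).

(* Main.v *)
Require Import Defs.
From mathcomp Require Import zify.
From HB Require Import structures.
From mathcomp Require Import all_boot all_order all_algebra.
From mathcomp Require Import all_classical all_reals all_analysis.
From mathcomp Require Import ring lra measurable_realfun.
Import Order.TTheory GRing.Theory Num.Theory.
Local Open Scope ring_scope.

Section Det.
Context {R : realType} {d : nat}.

Lemma sqnorm_ge0 (v : 'cV[R]_d) : 0 <= sqnorm v.
Proof. by apply: sumr_ge0 => j _; apply: sqr_ge0. Qed.

Lemma sqnormD (a b : 'cV[R]_d) :
  sqnorm (a + b) = sqnorm a + sqnorm b + 2 * (a^T *m b) 0 0.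
Proof.
rewrite /sqnorm mxE mulr_sumr -!big_split /=; apply: eq_bigr => j _.
by rewrite !mxE; ring.
Qed.

Lemma sqnormN (a b : 'cV[R]_d) : sqnorm (a - b) = sqnorm (b - a).
Proof. by rewrite /sqnorm; apply: eq_bigr => j _; rewrite !mxE; ring. Qed.

Lemma sqnorm_le2 (a b : 'cV[R]_d) :
  sqnorm (a + b) <= 2 * sqnorm a + 2 * sqnorm b.
Proof.
rewrite /sqnorm !mulr_sumr -big_split /=; apply: ler_sum => j _.
rewrite !mxE; have := sqr_ge0 (a j 0 - b j 0); nra.
Qed.

Lemma jensen_scal (I : finType) (p x : I -> R) :
  (forall z, 0 <= p z) -> \sum_z p z = 1 ->
  (\sum_z p z * x z) ^+ 2 <= \sum_z p z * x z ^+ 2.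
Proof.
move=> p0 p1; set mu := \sum_z p z * x z.
have E : \sum_z p z * (x z - mu) ^+ 2 =
   \sum_z p z * x z ^+ 2 - 2 * mu * \sum_z p z * x z + mu ^+ 2 * \sum_z p z.
  rewrite (eq_bigr (fun z => p z * x z ^+ 2 - (2 * mu) * (p z * x z) + mu ^+ 2 * p z)); last by move=> z _; ring.
  by rewrite big_split sumrB /= -!mulr_sumr.
have : 0 <= \sum_z p z * (x z - mu) ^+ 2.
  by apply: sumr_ge0 => z _; apply: mulr_ge0 => //; apply: sqr_ge0.
rewrite E p1 -/mu; lra.
Qed.

Lemma sqnorm_jensen (I : finType) (p : I -> R) (v : I -> 'cV[R]_d) :
  (forall z, 0 <= p z) -> \sum_z p z = 1 ->
  sqnorm (\sum_z p z *: v z) <= \sum_z p z * sqnorm (v z).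
Proof.
move=> p0 p1; rewrite /sqnorm.
under [X in _ <= X]eq_bigr do rewrite mulr_sumr.
rewrite exchange_big /=; apply: ler_sum => j _.
rewrite summxE (eq_bigr (fun k => p k * v k j 0)); last by move=> k _; rewrite mxE.
exact: jensen_scal.
Qed.

Lemma proj_opt (P : affsub R d) (w q : 'cV[R]_d) :
  in_affsub P q -> sqnorm (w - proj_affsub P w) <= sqnorm (w - q).
Proof.
case=> lam ->; rewrite /proj_affsub.
set U := as_U P; set m := as_m P.
have orth : U^T *m U = 1%:M by exact: as_orth.
set X := U *m U^T *m (w - m).
set r := w - (X + m).
have -> : w - (U *m lam + m) = r + U *m (U^T *m (w - m) - lam).
  rewrite mulmxBr mulmxA -/X /r.
  by apply/matrixP => i j; rewrite !mxE; ring.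
rewrite sqnormD.
have -> : (r^T *m (U *m (U^T *m (w - m) - lam))) = 0.
  rewrite mulmxA.
  have -> : r^T *m U = (U^T *m r)^T by rewrite trmx_mul trmxK.
  have -> : U^T *m r = 0.
    rewrite /r /X (_ : w - (U *m U^T *m (w - m) + m) = (w - m) - U *m U^T *m (w - m)); last first.
      by apply/matrixP => i j; rewrite !mxE; ring.
    by rewrite mulmxBr !mulmxA orth mul1mx subrr.
  by rewrite trmx0 mul0mx.
rewrite mxE mulr0 addr0 lerDl; exact: sqnorm_ge0.
Qed.

Lemma affcomb_in (P : affsub R d) c (p : 'I_c -> R) (gam : 'I_c -> 'cV[R]_d) :
  (forall z, in_affsub P (gam z)) -> \sum_z p z = 1 ->
  in_affsub P (\sum_z p z *: gam z).
Proof.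
move=> hin p1.
have [lam hlam] := choice hin.
exists (\sum_z p z *: lam z).
rewrite mulmx_sumr.
have -> : as_m P = \sum_z p z *: as_m P by rewrite -scaler_suml p1 scale1r.
rewrite -big_split /=; apply: eq_bigr => z _.
by rewrite hlam scalerDr -scalemxAr.
Qed.


Lemma avg (T : finType) (a : T -> R) (k : nat) :
  forall m (A : {set T}), #|A| = m -> (k <= m)%N ->
  exists S : {set T}, [/\ S \subset A, #|S| = k &
     m%:R * \sum_(i in S) a i <= k%:R * \sum_(i in A) a i].
Proof.
elim=> [|m IH] A hA hk.
  move: hk; rewrite leqn0 => /eqP ->.
  by exists finset.set0; rewrite finset.sub0set cards0 big_set0 !mul0r.
have [->|hkm] := eqVneq k m.+1; first by exists A; rewrite hA.
have [k0|kpos] := eqVneq k 0%N.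
  by exists finset.set0; rewrite finset.sub0set cards0 big_set0 k0 mulr0 mul0r.
have hk' : (k <= m)%N by rewrite -ltnS ltn_neqAle hkm hk.
have /card_gt0P [x0 hx0] : (0 < #|A|)%N by rewrite hA.
have [x hx hmax] : exists2 x, x \in A & forall y, y \in A -> a y <= a x.
  by case: (@arg_maxP _ _ _ x0 (fun i => i \in A) a hx0) => x hx hm; exists x.
have hA' : #|A :\ x| = m by move: hA; rewrite (cardsD1 x) hx => -[].
have [S [hS cS ineq]] := IH _ hA' hk'.
exists S; split => //; first exact: (fintype.subset_trans hS (subD1set _ _)).
rewrite (big_setD1 x hx) /=.
have hb : \sum_(i in A :\ x) a i <= m%:R * a x.
  apply: le_trans (_ : \sum_(i in A :\ x) a x <= _); last first.
    by rewrite sumr_const hA' mulr_natl.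
  by apply: ler_sum => i; rewrite in_setD1 => /andP[_ /hmax].
have mpos : (0 : R) < m%:R by rewrite ltr0n; apply: leq_trans hk'; rewrite lt0n.
have k0' : (0 : R) <= k%:R by [].
have h1 := ler_wpM2l (ler0n R m.+1) ineq.
have h2 := ler_wpM2l k0' hb.
rewrite -(ler_pM2l mpos).
rewrite -natr1 in h1 *.
nra.
Qed.
End Det.

Lemma card_first_set n f : #|first_set n f| = (n - f)%N.
Proof.
have hk : (n - f <= n)%N by rewrite leq_subr.
have -> : first_set n f = [set widen_ord hk x | x in 'I_(n - f)].
  apply/setP => i; rewrite /first_set inE; apply/idP/imsetP.
    by move=> hi; exists (Ordinal hi) => //; apply: val_inj.
  by case=> x _ ->; rewrite /= ltn_ord.
rewrite card_imset ?card_ord //.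
by move=> x y /(congr1 val) /= /val_inj.
Qed.

Lemma tl_le (R : realType) n f d (g : 'I_n -> 'cV[R]_d) P (S : {set 'I_n}) :
  #|S| = (n - f)%N -> trimmed_loss f g P <= resid_sum g P S.
Proof.
move=> hS; rewrite /trimmed_loss.
case: arg_minP; first by rewrite card_first_set.
by move=> S0 _ hmin; apply: hmin; rewrite hS.
Qed.

Lemma det_bound (R : realType) (n f c d : nat) (H : {set 'I_n})
  (hH : (0 < #|H|)%N) (hnf : (n - f <= #|H|)%N)
  (g Eg : 'I_n -> 'cV[R]_d) (gam Egam : 'I_c -> 'cV[R]_d)
  (p : 'I_n -> 'I_c -> R) (P0 Phat : affsub R d) :
     (forall i, i \in H -> forall z, 0 <= p i z) ->
     (forall i, i \in H -> \sum_(z < c) p i z = 1) ->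
     (forall i, i \in H -> Eg i = \sum_(z < c) p i z *: Egam z) ->
     (forall z, in_affsub P0 (gam z)) ->
     trimmed_loss f g Phat <= trimmed_loss f g P0 ->
     trimmed_loss f g Phat <=
       2 * (n - f)%:R / #|H|%:R *
       (\sum_(i in H) sqnorm (g i - Eg i)
        + \sum_(i in H) \sum_(z < c) p i z * sqnorm (Egam z - gam z)).
Proof.
move=> p0 p1 hEg hin hle.
apply: le_trans hle _.
set a := fun i => sqnorm (g i - proj_affsub P0 (g i)).
have [S [hS cS ineq]] := @avg R _ a _ _ H (erefl _) hnf.
apply: le_trans (@tl_le R n f d g P0 S cS) _.
have Hpos : (0 : R) < #|H|%:R by rewrite ltr0n.
have step1 : resid_sum g P0 S <= (n - f)%:R / #|H|%:R * \sum_(i in H) a i.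
  rewrite mulrAC ler_pdivlMr // mulrC; exact: ineq.
apply: le_trans step1 _.
set SA := \sum_(i in H) sqnorm (g i - Eg i).
set SB := \sum_(i in H) \sum_(z < c) p i z * sqnorm (Egam z - gam z).
have -> : 2 * (n - f)%:R / #|H|%:R * (SA + SB) = (n - f)%:R / #|H|%:R * (2 * SA + 2 * SB) by ring.
apply: ler_wpM2l; first by apply: divr_ge0.
rewrite /SA /SB !mulr_sumr -big_split /=; apply: ler_sum => i hi.
set q := \sum_(z < c) p i z *: gam z.
have hq : in_affsub P0 q by apply: affcomb_in => //; apply: p1.
apply: le_trans (@proj_opt _ _ P0 (g i) q hq) _.
have -> : g i - q = (g i - Eg i) + (Eg i - q).
  by rewrite addrA subrK.
apply: le_trans (sqnorm_le2 _ _) _.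
rewrite lerD2l; apply: ler_wpM2l => //.
have -> : Eg i - q = \sum_(z < c) p i z *: (Egam z - gam z).
  by rewrite hEg // /q -sumrB; apply: eq_bigr => z _; rewrite scalerBr.
exact: sqnorm_jensen (p0 i hi) (p1 i hi).
Qed.

Lemma int_lin (d0 : measure_display) (T : measurableType d0) (R : realType)
  (Pr : probability T R) (I : finType) (P : pred I) (c b : I -> R)
  (h : I -> T -> R) :
  (forall i, 0 <= c i) -> (forall i, measurable_fun setT (h i)) ->
  (forall i w, 0 <= h i w) ->
  (forall i, P i -> (\int[Pr]_w (h i w)%:E <= (b i)%:E)%E) ->
  (\int[Pr]_w (\sum_(i | P i) c i * h i w)%:E
     <= (\sum_(i | P i) c i * b i)%:E)%E.
Proof.
move=> c0 mh h0 hb.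
rewrite (eq_integral (fun w => \sum_(i <- index_enum I)
    (if P i then (c i * h i w)%:E else 0%E))); last first.
  by move=> w _; rewrite -sumEFin big_mkcond.
rewrite ge0_integral_sum //; last first.
- by move=> i w _; case: (P i) => //; rewrite lee_fin mulr_ge0.
- move=> i; case: (P i); last exact: measurable_cst.
  by apply/measurable_EFinP; apply: measurable_funM => //; exact: measurable_cst.
rewrite -sumEFin [X in (_ <= X)%E]big_mkcond /=; apply: lee_sum => i _.
case hP: (P i); last by rewrite integral0.
under eq_integral do rewrite EFinM.
rewrite ge0_integralZl_EFin //.
- by rewrite EFinM; apply: lee_wpmul2l => //; [rewrite lee_fin | exact: hb].
- by move=> w _; rewrite lee_fin.
- by apply/measurable_EFinP.
Qed.

Theorem mainTheorem7 (R : realType) (n f c d : nat)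
  (f_gt0 : (0 < f)%N) (c_ge2 : (2 <= c)%N) (d_ge_c : (c <= d)%N)
  (nf_ge1 : (1 <= n - 2 * f)%N)
  (H : {set 'I_n}) (HB : (#|~: H| <= f)%N) :
  (* deterministic bound *)
  (forall (g Eg : 'I_n -> 'cV[R]_d) (gam Egam : 'I_c -> 'cV[R]_d)
          (p : 'I_n -> 'I_c -> R) (P0 Phat : affsub R d),
     (forall i, i \in H -> forall z, 0 <= p i z) ->
     (forall i, i \in H -> \sum_(z < c) p i z = 1) ->
     (forall i, i \in H -> Eg i = \sum_(z < c) p i z *: Egam z) ->
     (forall z, in_affsub P0 (gam z)) ->
     trimmed_loss f g Phat <= trimmed_loss f g P0 ->
     trimmed_loss f g Phat <=
       2 * (n - f)%:R / #|H|%:R *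
       (\sum_(i in H) sqnorm (g i - Eg i)
        + \sum_(i in H) \sum_(z < c) p i z * sqnorm (Egam z - gam z))) /\
  (* consequence in expectation *)
  (forall (d0 : measure_display) (T : measurableType d0)
          (Pr : probability T R)
          (g : T -> 'I_n -> 'cV[R]_d) (Eg : 'I_n -> 'cV[R]_d)
          (gam : T -> 'I_c -> 'cV[R]_d) (Egam : 'I_c -> 'cV[R]_d)
          (p : 'I_n -> 'I_c -> R) (P0 Phat : T -> affsub R d) (eps eps_s : R),
     (forall i j, measurable_fun setT (fun w => g w i j 0)) ->
     (forall z j, measurable_fun setT (fun w => gam w z j 0)) ->
     measurable_fun setT (fun w => trimmed_loss f (g w) (Phat w)) ->
     (forall i, i \in H -> forall z, 0 <= p i z) ->
     (forall i, i \in H -> \sum_(z < c) p i z = 1) ->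
     (forall i, i \in H -> Eg i = \sum_(z < c) p i z *: Egam z) ->
     (forall w z, in_affsub (P0 w) (gam w z)) ->
     (forall w, trimmed_loss f (g w) (Phat w) <= trimmed_loss f (g w) (P0 w)) ->
     (forall i, i \in H ->
        (\int[Pr]_w (sqnorm (g w i - Eg i))%:E <= (eps ^+ 2)%:E)%E) ->
     (forall z,
        (\int[Pr]_w (sqnorm (gam w z - Egam z))%:E <= (eps_s ^+ 2)%:E)%E) ->
     (\int[Pr]_w (trimmed_loss f (g w) (Phat w))%:E
        <= (2 * (n - f)%:R * (eps ^+ 2 + eps_s ^+ 2))%:E)%E).
Proof.
have hHc : (#|H| + #|~: H| = n)%N by rewrite cardsC card_ord.
have hnf : (n - f <= #|H|)%N by lia.
have hH : (0 < #|H|)%N by lia.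
split; first by move=> *; apply: det_bound.
move=> d0 T Pr g Eg gam Egam p P0 Phat eps eps_s mg mgam mL p0 p1 hEg hin hle hA hB.
pose K : R := 2 * (n - f)%:R / #|H|%:R.
have K0 : 0 <= K by apply: divr_ge0 => //; apply: mulr_ge0.
pose q := fun z : 'I_c => \sum_(i in H) p i z.
have q0 : forall z, 0 <= q z by move=> z; apply: sumr_ge0 => i hi; exact: p0.
pose F := fun w : T => \sum_(i in H) K * sqnorm (g w i - Eg i).
pose G := fun w : T => \sum_(z < c) (K * q z) * sqnorm (gam w z - Egam z).
have pw : forall w, trimmed_loss f (g w) (Phat w) <= F w + G w.
  move=> w; apply: le_trans (@det_bound R n f c d H hH hnf (g w) Eg (gam w) Egam p (P0 w) (Phat w) p0 p1 hEg (hin w) (hle w)) _.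
  rewrite le_eqVlt; apply/orP; left; apply/eqP.
  rewrite -/K mulrDr /F /G mulr_sumr; congr (_ + _).
  rewrite exchange_big /= mulr_sumr; apply: eq_bigr => z _.
  by rewrite /q -mulrA mulr_suml sqnormN.
have mA : forall i, measurable_fun setT (fun w => sqnorm (g w i - Eg i)).
  move=> i; rewrite /sqnorm; apply: measurable_sum => j.
  rewrite (_ : (fun x => _) = (fun x => (g x i j 0 - Eg i j 0) ^+ 2)); last first.
    by apply/funext => x; rewrite !mxE.
  apply: measurable_funX; apply: measurable_funB => //; exact: measurable_cst.
have mB : forall z, measurable_fun setT (fun w => sqnorm (gam w z - Egam z)).
  move=> z; rewrite /sqnorm; apply: measurable_sum => j.
  rewrite (_ : (fun x => _) = (fun x => (gam x z j 0 - Egam z j 0) ^+ 2)); last first.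
    by apply/funext => x; rewrite !mxE.
  apply: measurable_funX; apply: measurable_funB => //; exact: measurable_cst.
have mF : measurable_fun setT F.
  rewrite (_ : F = (fun w => \sum_(i <- index_enum 'I_n)
      (if i \in H then K * sqnorm (g w i - Eg i) else 0))); last first.
    by apply/funext => w; rewrite /F big_mkcond.
  apply: measurable_sum => i; case: (i \in H); last exact: measurable_cst.
  by apply: measurable_funM => //; exact: measurable_cst.
have mG : measurable_fun setT G.
  rewrite /G; apply: measurable_sum => i.
  by apply: measurable_funM => //; exact: measurable_cst.
have F0 : forall w, 0 <= F w.
  by move=> w; apply: sumr_ge0 => i _; apply: mulr_ge0 => //; exact: sqnorm_ge0.
have G0 : forall w, 0 <= G w.
  by move=> w; apply: sumr_ge0 => i _; apply: mulr_ge0 => //; [exact: mulr_ge0 | exact: sqnorm_ge0].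
apply: le_trans (_ : (\int[Pr]_w ((F w)%:E + (G w)%:E) <= _)%E).
  apply: ge0_le_integral => //.
  - move=> w _; rewrite lee_fin /trimmed_loss /resid_sum.
    by apply: sumr_ge0 => i _; exact: sqnorm_ge0.
  - exact/measurable_EFinP.
  - by apply: emeasurable_funD; apply/measurable_EFinP.
  - by move=> w _; rewrite lee_fin; exact: pw.
rewrite ge0_integralD //; last first.
- exact/measurable_EFinP.
- by move=> w _; rewrite lee_fin.
- exact/measurable_EFinP.
- by move=> w _; rewrite lee_fin.
have I1 := @int_lin _ T R Pr _ (mem H) (fun => K) (fun => eps ^+ 2)
   (fun i w => sqnorm (g w i - Eg i)) (fun => K0) mA (fun i w => sqnorm_ge0 _) hA.
have I2 := @int_lin _ T R Pr _ predT (fun z => K * q z) (fun => eps_s ^+ 2)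
   (fun z w => sqnorm (gam w z - Egam z)) (fun z => mulr_ge0 K0 (q0 z)) mB
   (fun i w => sqnorm_ge0 _) (fun z _ => hB z).
apply: le_trans (leeD I1 I2) _.
rewrite -EFinD lee_fin le_eqVlt; apply/orP; left; apply/eqP.
have e1 : \sum_(i | mem H i) K * eps ^+ 2 = #|H|%:R * (K * eps ^+ 2).
  by rewrite sumr_const mulr_natl.
have e2 : \sum_(i | predT i) K * q i * eps_s ^+ 2 = K * eps_s ^+ 2 * \sum_(z < c) q z.
  by rewrite mulr_sumr; apply: eq_bigr => z _; ring.
have e3 : \sum_(z < c) q z = #|H|%:R.
  rewrite /q /= exchange_big /= (eq_bigr (fun => 1)); last by move=> i hi; exact: p1.
  by rewrite sumr_const -mulr_natl mulr1.
rewrite e1 e2 e3 /K.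
have Hn0 : (#|H|%:R : R) != 0 by rewrite pnatr_eq0 -lt0n.
by field.
Qed.
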